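(* There is an absolute constant $C$ such that the following holds. Let $q$ be odd, $V$ an $n$-dimensional space over $\mathbb{F}_q$ with $n\ge 4$, $G$ one of $\mathrm{SL}(V),\mathrm{Sp}(V),\mathrm{SU}(V)$, $\mathcal T$ the set of transvections of $G$, and $X\subseteq\mathcal T$ a generating set of $G$ such that: (P2) ${}_VX$ spans $V$, $X_{V^*}$ spans $V^*$ and $\Gamma(X)$ is strongly connected; (P3) the weights of all cycles of $\Gamma(X)$ generate $\mathbb{F}_q$; (P4) if $G=\mathrm{Sp}(V)$, every cycle of $\Gamma(\mathcal T)$ is symplectic; (P5) if $G=\mathrm{SL}(V)$ and $q$ is a square, $\Gamma(X)$ contains a non-unitary cycle. Then there is a set $X'$ with $X\subseteq X'\subseteq\mathcal T$ and $\ell_X(X')\le Cn$ such that for any $s,t\in\mathcal T$ for which $[s,t]$ is not an edge of $\Gamma(\mathcal T)$ there is $r\in X'$ with $[s,r]$ and $[r,t]$ edges of $\Gamma(\mathcal T)$. In particular the directed diameter of $\Gamma(X'')$ is at most $2$ for every $X'\subseteq X''\subseteq\mathcal T$.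
   Context: $\mathrm{Sp}(V)$, $\mathrm{SU}(V)$: isometry groups (determinant one in the unitary case) of a non-degenerate alternating, resp. hermitian (w.r.t. $\lambda\mapsto\lambda^{\sqrt q}$, $q$ square) form. Transvections: $s=1+u_s\otimes\phi_s$, $x\mapsto x+\phi_s(x)u_s$, $\phi_s(u_s)=0$. For $Y\subseteq\mathcal T$: ${}_VY=\{u_s:s\in Y\}$, $Y_{V^*}=\{\phi_s:s\in Y\}$ (up to scalars). $\Gamma(Y)$: directed graph on $Y$ with edge $[s,t]$ iff $\phi_t(u_s)\ne 0$. Weight $w(r_1,\dots,r_k)=\prod_i\phi_{r_{i+1}}(u_{r_i})$ (indices mod $k$); cycle: nonzero weight; symplectic: $w(r_1,\dots,r_k)+(-1)^{k+1}w(r_k,\dots,r_1)=0$; unitary: $w(r_1,\dots,r_k)+(-1)^{k+1}w(r_k,\dots,r_1)^{\sqrt q}=0$. $\ell_X(Y)=\min\{k: Y\subseteq(X\cup X^{-1}\cup\{1\})^k\}$. *)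

(* Defs.v *)
From HB Require Import structures.
From mathcomp Require Import all_boot all_order all_algebra.
Set Implicit Arguments. Unset Strict Implicit. Unset Printing Implicit Defensive.
Import GRing.Theory.
Local Open Scope ring_scope.

(* V = 'rV[F]_n (row vectors); linear maps are n x n matrices acting on the
   right: x |-> x *m g.  A linear form phi is a column vector f, phi(x) = x *m f. *)

Section Defs.
Variables (F : finFieldType) (n : nat).
Local Notation M := 'M[F]_n.

(* (u, f) is transvection data for s: s = 1 + u (x) phi, i.e.
   x *m s = x + (x *m f) *m u, with u <> 0, phi <> 0, phi(u) = 0. *)
Definition tdata (s : M) (u : 'rV[F]_n) (f : 'cV[F]_n) : bool :=
  [&& u != 0, f != 0, u *m f == 0 & s == 1%:M + f *m u].

Definition is_transvection (s : M) : bool :=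
  [exists u, exists f, tdata s u f].

(* a chosen representative (u_s, phi_s) (defined up to scalars) *)
Definition tpick (s : M) := [pick p : 'rV[F]_n * 'cV[F]_n | tdata s p.1 p.2].
Definition uvec (s : M) : 'rV[F]_n := if tpick s is Some p then p.1 else 0.
Definition fvec (s : M) : 'cV[F]_n := if tpick s is Some p then p.2 else 0.

Definition edge (s t : M) : bool :=
  [exists us, exists fs, exists ut, exists ft,
     [&& tdata s us fs, tdata t ut ft & us *m ft != 0]].

Definition weight (rs : seq M) : F :=
  \prod_(i < size rs)
     (uvec (nth 0 rs i) *m fvec (nth 0 rs (i.+1 %% size rs))) ord0 ord0.

Definition is_cycle (Y : {set M}) (rs : seq M) : bool :=
  [&& (0 < size rs)%N, all (mem Y) rs, uniq rs & weight rs != 0].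

Definition symplectic_cycle (rs : seq M) : Prop :=
  weight rs + (-1) ^+ (size rs).+1 * weight (rev rs) = 0.

(* unitary with respect to lambda |-> lambda ^+ r  (r = sqrt q) *)
Definition unitary_cycle (r : nat) (rs : seq M) : Prop :=
  weight rs + (-1) ^+ (size rs).+1 * (weight (rev rs)) ^+ r = 0.

Definition graph_rel (Y : {set M}) : rel M :=
  fun s t => [&& s \in Y, t \in Y & edge s t].

Definition strongly_connected (Y : {set M}) : Prop :=
  forall s t, s \in Y -> t \in Y -> connect (graph_rel Y) s t.

Definition spans_V (Y : {set M}) : Prop :=
  (1%:M <= \sum_(s in Y) <<uvec s>>)%MS.
Definition spans_Vdual (Y : {set M}) : Prop :=
  (1%:M <= \sum_(s in Y) <<(fvec s)^T>>)%MS.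

Definition generates_field (S : F -> Prop) : Prop :=
  forall K : {pred F},
    1 \in K ->
    (forall x y, x \in K -> y \in K -> x - y \in K) ->
    (forall x y, x \in K -> y \in K -> x * y \in K) ->
    (forall x, x \in K -> x^-1 \in K) ->
    (forall x, S x -> x \in K) ->
    forall x, x \in K.

Definition setmul (A B : {set M}) : {set M} := [set a *m b | a in A, b in B].
Definition symm_gen (X : {set M}) : {set M} :=
  X :|: [set invmx x | x in X] :|: [set 1%:M].
Definition ball (X : {set M}) (k : nat) : {set M} :=
  iter k (fun S => setmul S (symm_gen X)) [set 1%:M].

Definition ell_le (X Y : {set M}) (m : nat) : Prop :=
  exists k, (k <= m)%N /\ Y \subset ball X k.

Definition generates (X Gs : {set M}) : Prop :=
  exists k, ball X k = Gs.

End Defs.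

Inductive gkind := KSL | KSp | KSU.

Section Groups.
Variables (F : finFieldType) (n : nat).
Local Notation M := 'M[F]_n.

Definition frob (r : nat) (x : F) : F := x ^+ r.

(* standing assumptions on the form J (Gram matrix, B(x,y) = x J y^sigma^T) *)
Definition form_ok (k : gkind) (J : M) (r : nat) : Prop :=
  match k with
  | KSL => True
  | KSp => J^T = - J /\ (forall i, J i i = 0) /\ J \in unitmx
  | KSU => (r * r = #|F|)%N /\ J^T = map_mx (frob r) J /\ J \in unitmx
  end.

Definition inG (k : gkind) (J : M) (r : nat) (g : M) : bool :=
  match k with
  | KSL => \det g == 1
  | KSp => g *m J *m g^T == J
  | KSU => (g *m J *m (map_mx (frob r) g)^T == J) && (\det g == 1)
  end.

Definition Gset k J r : {set M} := [set g | inG k J r g].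
Definition Tset k J r : {set M} := [set g in Gset k J r | is_transvection g].

End Groups.

(* Main.v *)
Require Import Defs.
From mathcomp Require Import all_boot all_order all_algebra all_fingroup all_solvable all_field.
From mathcomp Require Import zify.
Set Implicit Arguments. Unset Strict Implicit. Unset Printing Implicit Defensive.
Import GRing.Theory.
Local Open Scope ring_scope.

Section Aux.
Variable F : finFieldType.

Lemma card_pchar_nat : [pchar F].-nat #|F|.
Proof.
have [p pr_p pF] := finPcharP F.
have := abelem_pgroup (fin_ring_pchar_abelem pF); rewrite /pgroup cardsT => h.
by rewrite (eq_pnat _ (pcharf_eq pF)).
Qed.

Lemma two_neq0 : odd #|F| -> (2%:R : F) != 0.
Proof.
move=> odF; rewrite natf_neq0_pchar (pnatE _ (isT : prime 2)); apply/negP => h2.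
have h1 : (1 < #|F|)%N by apply: finNzRing_gt1.
have hp : pdiv #|F| \in \pi(#|F|) by rewrite pi_pdiv.
have := pnatPpi card_pchar_nat hp; rewrite (pcharf_eq h2) inE => /eqP h.
by move: (pdiv_dvd #|F|); rewrite h dvdn2 odF.
Qed.

Variable r : nat.
Hypothesis hr : (r * r = #|F|)%N.
Local Notation fr := (@frob F r).

Lemma r_gt0 : (0 < r)%N.
Proof.
case: r hr => // h; have := finNzRing_gt1 F; by rewrite -h.
Qed.

Lemma frobD x y : fr (x + y) = fr x + fr y.
Proof.
rewrite /frob exprDn_pchar //; apply: pnat_dvd card_pchar_nat.
by rewrite -hr dvdn_mulr.
Qed.

Lemma frobM x y : fr (x * y) = fr x * fr y.
Proof. by rewrite /frob exprMn. Qed.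

Lemma frob0 : fr 0 = 0.
Proof. by rewrite /frob expr0n; case: r r_gt0. Qed.

Lemma frob1 : fr 1 = 1.
Proof. by rewrite /frob expr1n. Qed.

Lemma frob_sum (I : finType) (G : I -> F) : fr (\sum_i G i) = \sum_i fr (G i).
Proof. exact: (big_morph _ frobD frob0). Qed.

Lemma map_frobM m1 m2 m3 (A : 'M[F]_(m1, m2)) (B : 'M[F]_(m2, m3)) :
  map_mx (fr) (A *m B) = map_mx (fr) A *m map_mx (fr) B.
Proof.
apply/matrixP => i j; rewrite !mxE frob_sum; apply: eq_bigr => k _.
by rewrite frobM !mxE.
Qed.

Lemma map_frob1 m : map_mx (fr) (1%:M : 'M[F]_m) = 1%:M.
Proof.
by apply/matrixP => i j; rewrite !mxE; case: (i == j); rewrite ?frob0 ?frob1.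
Qed.
End Aux.

Section G.
Variables (F : finFieldType) (n : nat).
Local Notation M := 'M[F]_n.

Lemma inG1 k (J : M) r : form_ok k J r -> inG k J r 1%:M.
Proof.
case: k => /=; first by rewrite det1.
  by move=> _; rewrite mul1mx trmx1 mulmx1.
move=> [hr _]; by rewrite map_frob1 // trmx1 mul1mx mulmx1 det1 !eqxx.
Qed.

Lemma inGM k (J : M) r g h : form_ok k J r -> inG k J r g -> inG k J r h ->
  inG k J r (g *m h).
Proof.
case: k => /=.
- by move=> _ /eqP hg /eqP hh; rewrite det_mulmx hg hh mulr1.
- move=> _ /eqP hg /eqP hh; rewrite trmx_mul.
  have -> : g *m h *m J *m (h^T *m g^T) = g *m (h *m J *m h^T) *m g^T.
    by rewrite !mulmxA.
  by rewrite hh hg.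
- move=> [hr _] /andP[/eqP hg /eqP dg] /andP[/eqP hh /eqP dh].
  rewrite det_mulmx dg dh mulr1 eqxx andbT map_frobM // trmx_mul.
  have -> : g *m h *m J *m ((map_mx (frob r) h)^T *m (map_mx (frob r) g)^T)
     = g *m (h *m J *m (map_mx (frob r) h)^T) *m (map_mx (frob r) g)^T.
    by rewrite !mulmxA.
  by rewrite hh hg.
Qed.

Lemma inGV k (J : M) r P Q : form_ok k J r -> P *m Q = 1%:M -> inG k J r Q ->
  inG k J r P.
Proof.
case: k => /=.
- move=> _ PQ /eqP dQ; have := det_mulmx P Q; rewrite PQ det1 dQ mulr1 => <-.
  by [].
- move=> _ PQ /eqP hQ; apply/eqP.
  have -> : P *m J *m P^T = (P *m Q) *m J *m (P *m Q)^T.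
    by rewrite trmx_mul -{1}hQ !mulmxA.
  by rewrite PQ mul1mx trmx1 mulmx1.
- move=> [hr _] PQ /andP[/eqP hQ /eqP dQ]; apply/andP; split; last first.
    by have := det_mulmx P Q; rewrite PQ det1 dQ mulr1 => <-.
  apply/eqP.
  have -> : P *m J *m (map_mx (frob r) P)^T
     = (P *m Q) *m J *m (map_mx (frob r) (P *m Q))^T.
    by rewrite map_frobM // trmx_mul -{1}hQ !mulmxA.
  by rewrite PQ map_frob1 // mul1mx trmx1 mulmx1.
Qed.
End G.

Section Trans.
Variables (F : finFieldType) (n : nat).
Local Notation M := 'M[F]_n.

Lemma tdataP (s : M) u f : tdata s u f ->
  [/\ u != 0, f != 0, u *m f = 0 & s = 1%:M + f *m u].
Proof. by case/and4P => h1 h2 /eqP h3 /eqP h4. Qed.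

Lemma tdata_pick (s : M) : is_transvection s -> tdata s (uvec s) (fvec s).
Proof.
rewrite /uvec /fvec /tpick; case: pickP => [p hp|h] //.
case/existsP => u /existsP [f hf]; by have := h (u, f); rewrite hf.
Qed.

Lemma mx11_mull m (c : 'M[F]_1) (a : 'M[F]_(1, m)) : c != 0 -> c *m a = 0 -> a = 0.
Proof.
move=> hc; rewrite [c]mx11_scalar mul_scalar_mx => /eqP; rewrite scaler_eq0.
case/orP => [h|/eqP //]; case/negP: hc; apply/eqP/matrixP => i j.
by rewrite !ord1 mxE (eqP h).
Qed.

Lemma mx11_mulr m (c : 'M[F]_1) (a : 'M[F]_(m, 1)) : c != 0 -> a *m c = 0 -> a = 0.
Proof.
move=> hc; rewrite [c]mx11_scalar mul_mx_scalar => /eqP; rewrite scaler_eq0.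
case/orP => [h|/eqP //]; case/negP: hc; apply/eqP/matrixP => i j.
by rewrite !ord1 mxE (eqP h).
Qed.

Lemma tdata_uniq (s : M) u f u' f' : tdata s u f -> tdata s u' f' ->
  f *m u = f' *m u'.
Proof.
move=> /tdataP [_ _ _ h1] /tdataP [_ _ _ h2]; move: h2; rewrite h1.
by move/addrI.
Qed.

Lemma edge_vec (s t : M) : is_transvection s -> is_transvection t -> edge s t ->
  uvec s *m fvec t != 0.
Proof.
move=> /tdata_pick hs /tdata_pick ht /existsP [us /existsP [fs /existsP [ut
  /existsP [ft /and3P [hs' ht' hne]]]]].
have e1 := tdata_uniq hs hs'; have e2 := tdata_uniq ht ht'.
have h1 : uvec s *m ft != 0.
  apply/eqP => h; have : fs *m (us *m ft) = 0.
    by rewrite mulmxA -e1 -mulmxA h mulmx0.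
  move/(mx11_mulr hne) => fs0; by case/tdataP: hs' => _ /eqP.
apply/eqP => h; have : (uvec s *m ft) *m ut = 0.
  by rewrite -mulmxA -e2 mulmxA h mul0mx.
move/(mx11_mull h1) => ut0; by case/tdataP: ht' => /eqP.
Qed.

Lemma vec_edge (s t : M) us fs ut ft : tdata s us fs -> tdata t ut ft ->
  us *m ft != 0 -> edge s t.
Proof.
move=> h1 h2 h3; apply/existsP; exists us; apply/existsP; exists fs.
apply/existsP; exists ut; apply/existsP; exists ft; by rewrite h1 h2 h3.
Qed.

Lemma nil2 (g : 'cV[F]_n) (a : 'rV[F]_n) : a *m g = 0 -> (g *m a) *m (g *m a) = 0.
Proof. by move=> h; rewrite mulmxA -(mulmxA g a g) h mulmx0 mul0mx. Qed.

Lemma pw_inv (g : 'cV[F]_n) (a : 'rV[F]_n) (c : F) : a *m g = 0 ->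
  (1%:M + c *: (g *m a)) *m (1%:M - c *: (g *m a)) = 1%:M :> M.
Proof.
move=> h; rewrite mulmxDl mulmxBr mul1mx mulmxBr mul1mx mulmx1 -scalemxAr -scalemxAl scalerA nil2 // scaler0 subr0.
by rewrite subrK.
Qed.
End Trans.

Section Ball.
Variables (F : finFieldType) (n : nat).
Local Notation M := 'M[F]_n.

Lemma pw_inv' (g : 'cV[F]_n) (a : 'rV[F]_n) (c : F) : a *m g = 0 ->
  (1%:M - c *: (g *m a)) *m (1%:M + c *: (g *m a)) = 1%:M :> M.
Proof. by move=> h; have := pw_inv (- c) h; rewrite !scaleNr opprK. Qed.

Lemma tinv (x : M) a g : tdata x a g ->
  invmx x = 1%:M - g *m a /\ (1%:M - g *m a) *m x = 1%:M.
Proof.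
case/tdataP => _ _ h ->; have e1 := pw_inv 1 h; have e2 := pw_inv' 1 h.
rewrite !scale1r in e1 e2; split => //.
have [u _] := mulmx1_unit e1.
have -> : 1%:M - g *m a = invmx (1%:M + g *m a) *m ((1%:M + g *m a) *m (1%:M - g *m a)).
  by rewrite mulmxA mulVmx // mul1mx.
by rewrite e1 mulmx1.
Qed.

Variable X : {set M}.

Lemma in_setmul (A B : {set M}) a b : a \in A -> b \in B -> a *m b \in setmul A B.
Proof. by move=> ha hb; apply/imset2P; exists a b. Qed.

Lemma sg1 : 1%:M \in symm_gen X.
Proof. by rewrite /symm_gen !inE eqxx !orbT. Qed.

Lemma sgX x : x \in X -> x \in symm_gen X.
Proof. by rewrite /symm_gen !inE => ->. Qed.

Lemma sgV x : x \in X -> invmx x \in symm_gen X.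
Proof. by move=> hx; rewrite /symm_gen !inE imset_f ?orbT. Qed.

Lemma ballS j : ball X j.+1 = setmul (ball X j) (symm_gen X).
Proof. by []. Qed.

Lemma ball0 : ball X 0 = [set 1%:M].
Proof. by []. Qed.

Lemma ball_sub j : ball X j \subset ball X j.+1.
Proof.
apply/subsetP => z hz; rewrite ballS -[z]mulmx1; exact: in_setmul hz sg1.
Qed.

Lemma ball_mono i j : (i <= j)%N -> ball X i \subset ball X j.
Proof.
move/subnK <-; elim: (j - i)%N => [|k IH] //=.
exact: subset_trans IH (ball_sub _).
Qed.

Lemma ball_mul i j a b : a \in ball X i -> b \in ball X j -> a *m b \in ball X (i + j).
Proof.
move=> ha; elim: j b => [|j IH] b.
  by rewrite ball0 inE addn0 => /eqP ->; rewrite mulmx1.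
rewrite addnS ballS => /imset2P [b1 b2 hb1 hb2 ->].
rewrite mulmxA; exact: in_setmul (IH _ hb1) hb2.
Qed.

Lemma ball1 x : x \in symm_gen X -> x \in ball X 1.
Proof. by move=> h; rewrite ballS -[x]mul1mx; apply: in_setmul => //; rewrite inE. Qed.

Lemma ball_G k J r j : form_ok k J r -> X \subset Tset k J r ->
  ball X j \subset Gset k J r.
Proof.
move=> fo XT; elim: j => [|j IH].
  by apply/subsetP => z; rewrite ball0 !inE => /eqP ->; apply: inG1.
apply/subsetP => z; rewrite ballS => /imset2P [z1 z2 h1 h2 ->].
rewrite inE; apply: inGM => //; first by have := subsetP IH _ h1; rewrite inE.
move: h2; rewrite /symm_gen !inE => /orP [/orP [h2|/imsetP [x hx ->]]|/eqP ->].
- by have := subsetP XT _ h2; rewrite !inE => /andP [].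
- have := subsetP XT _ hx; rewrite !inE => /andP [hG /tdata_pick ht].
  have [-> e] := tinv ht; exact: inGV fo e hG.
- exact: inG1.
Qed.
End Ball.

Section Step.
Variables (F : finFieldType) (n : nat).
Local Notation M := 'M[F]_n.
Variable X : {set M}.

Definition pw (A : M) k := iter k (fun B => B *m A) 1%:M.

Lemma pw_ball A k : A \in symm_gen X -> pw A k \in ball X k.
Proof.
move=> hA; elim: k => [|k IH]; first by rewrite ball0 inE.
by rewrite ballS; apply: in_setmul.
Qed.

Lemma pw_form (g : 'cV[F]_n) (a : 'rV[F]_n) k : a *m g = 0 ->
  pw (1%:M + g *m a) k = 1%:M + k%:R *: (g *m a).
Proof.
move=> h; elim: k => [|k IH]; first by rewrite scale0r addr0.
rewrite /= -/(pw _ k) IH mulmxDl mul1mx mulmxDr mulmx1 -scalemxAl nil2 //.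
by rewrite scaler0 addr0 -addrA -natr1 scalerDl scale1r; congr (_ + _); rewrite addrC.
Qed.

Lemma step_gen k J r j z u f x a g (i : nat) :
  form_ok k J r -> X \subset Tset k J r -> z \in ball X j -> tdata z u f ->
  x \in X -> tdata x a g -> (i <= 2)%N ->
  exists z', [/\ z' \in Tset k J r, z' \in ball X (j + 4) &
     tdata z' (u *m (1%:M + i%:R *: (g *m a))) ((1%:M - i%:R *: (g *m a)) *m f)].
Proof.
move=> fo XT hz tz hx tx hi.
set N := g *m a; set c : F := i%:R.
have [hu hf huf ez] := tdataP tz.
have [ha hg hag ex] := tdataP tx.
have PQ : (1%:M - c *: N) *m (1%:M + c *: N) = 1%:M := pw_inv' c hag.
have QP : (1%:M + c *: N) *m (1%:M - c *: N) = 1%:M := pw_inv c hag.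
have eQ : pw x i = 1%:M + c *: N by rewrite ex pw_form.
have eP : pw (invmx x) i = 1%:M - c *: N.
  have [-> _] := tinv tx.
  have -> : 1%:M - g *m a = 1%:M + g *m (- a) by rewrite mulmxN.
  by rewrite pw_form ?mulNmx ?hag ?oppr0 // mulmxN scalerN.
exists ((1%:M - c *: N) *m z *m (1%:M + c *: N)).
have hb : (1%:M - c *: N) *m z *m (1%:M + c *: N) \in ball X (j + 4).
  have h1 := ball_mul (ball_mul (pw_ball i (sgV hx)) hz) (pw_ball i (sgX hx)).
  rewrite eP eQ in h1; apply: (subsetP (ball_mono X _)) h1.
  lia.
have td : tdata ((1%:M - c *: N) *m z *m (1%:M + c *: N))
   (u *m (1%:M + c *: N)) ((1%:M - c *: N) *m f).
  apply/and4P; split.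
  - apply/eqP => h0; move/eqP: hu; apply; rewrite -[u]mulmx1 -QP mulmxA h0.
    by rewrite mul0mx.
  - apply/eqP => h0; move/eqP: hf; apply; rewrite -[f]mul1mx -QP -mulmxA h0.
    by rewrite mulmx0.
  - by rewrite mulmxA -(mulmxA u) QP mulmx1 huf.
  - rewrite ez; apply/eqP.
    set P := 1%:M - c *: N; set Q := 1%:M + c *: N.
    have -> : P *m (1%:M + f *m u) *m Q = P *m Q + P *m f *m (u *m Q).
      by rewrite (mulmxDr P) mulmx1 mulmxDl !mulmxA.
    by rewrite PQ.
split => //; rewrite inE; apply/andP; split.
  exact: (subsetP (ball_G (j + 4) fo XT) _ hb).
by apply/existsP; eexists; apply/existsP; eexists; exact: td.
Qed.
End Step.

Section Step2.
Variables (F : finFieldType) (n : nat).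
Local Notation M := 'M[F]_n.
Variable X : {set M}.

Lemma mx11_neq0 (c : 'M[F]_1) : (c != 0) = (c 0 0 != 0).
Proof.
apply/idP/idP; apply: contraNneq.
  by move=> h; apply/eqP/matrixP => i j; rewrite !ord1 mxE h.
by move=> ->; rewrite mxE.
Qed.

Lemma mx11_mul (A B : 'M[F]_1) : (A *m B) 0 0 = A 0 0 * B 0 0.
Proof. by rewrite mxE big_ord1. Qed.

Lemma mx11_addE (A B : 'M[F]_1) c : (A + c *: B) 0 0 = A 0 0 + c * B 0 0.
Proof. by rewrite !mxE. Qed.

Lemma mx11_subE (A B : 'M[F]_1) c : (A - c *: B) 0 0 = A 0 0 - c * B 0 0.
Proof. by rewrite !mxE. Qed.

Lemma step k J r j z u f x a g (psi : 'cV[F]_n) (v : 'rV[F]_n) :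
  form_ok k J r -> X \subset Tset k J r -> z \in ball X j -> tdata z u f ->
  x \in X -> tdata x a g -> u *m g != 0 -> a *m psi != 0 -> v *m f != 0 ->
  (2%:R : F) != 0 ->
  exists z' u' f', [/\ z' \in Tset k J r, z' \in ball X (j + 4), tdata z' u' f',
     v *m f' != 0 & u' *m psi != 0].
Proof.
move=> fo XT hz tz hx tx hug hapsi hvf two.
pose al := (u *m psi) 0 0; pose be := (u *m g) 0 0; pose ga := (a *m psi) 0 0.
pose de := (v *m f) 0 0; pose ep := (v *m g) 0 0 * (a *m f) 0 0.
have hbe : be != 0 by rewrite -mx11_neq0.
have hga : ga != 0 by rewrite -mx11_neq0.
have hde : de != 0 by rewrite -mx11_neq0.
suff [i [hi h1 h2]] : exists i, [/\ (i <= 2)%N, al + i%:R * (be * ga) != 0 &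
     de - i%:R * ep != 0].
  have [z' [h3 h4 h5]] := step_gen fo XT hz tz hx tx hi.
  exists z'; do 2 eexists; split; [exact: h3|exact: h4|exact: h5| |].
  - have -> : v *m ((1%:M - i%:R *: (g *m a)) *m f) =
       v *m f - i%:R *: ((v *m g) *m (a *m f)).
      by rewrite (mulmxA v) (mulmxBr v) mulmx1 mulmxBl -scalemxAr -scalemxAl !mulmxA.
    by rewrite mx11_neq0 mx11_subE mx11_mul.
  - have -> : u *m (1%:M + i%:R *: (g *m a)) *m psi =
       u *m psi + i%:R *: ((u *m g) *m (a *m psi)).
      by rewrite mulmxDr mulmx1 mulmxDl -scalemxAr -scalemxAl !mulmxA.
    by rewrite mx11_neq0 mx11_addE mx11_mul.
have hbg : be * ga != 0 by rewrite mulf_neq0.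
have [al0|alN] := eqVneq al 0.
  have [hd|hd] := eqVneq (de - 1%:R * ep) 0.
    exists 2%N; split => //; first by rewrite al0 add0r mulf_neq0.
    move/eqP: hd; rewrite mul1r subr_eq0 => /eqP <-.
    have -> : de - 2%:R * de = - de by rewrite mulr_natl mulr2n opprD addrA subrr add0r.
    by rewrite oppr_eq0.
  by exists 1%N; split => //; rewrite al0 add0r mul1r.
by exists 0%N; split => //; rewrite !mul0r ?addr0 ?subr0.
Qed.
End Step2.

Section Reach.
Variables (F : finFieldType) (n : nat).
Local Notation M := 'M[F]_n.
Variable X : {set M}.
Variable y : M.

Definition rstep (R : {set M}) : {set M} :=
  R :|: [set x in X | [exists w in R, graph_rel X w x]].
Definition reach j := iter j rstep [set y].

Lemma reachS j : reach j.+1 = rstep (reach j).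
Proof. by []. Qed.

Lemma reach_sub j : reach j \subset reach j.+1.
Proof. by rewrite reachS subsetUl. Qed.

Lemma reach_mono i j : (i <= j)%N -> reach i \subset reach j.
Proof.
move/subnK <-; elim: (j - i)%N => [|k IH] //=.
exact: subset_trans IH (reach_sub _).
Qed.

Lemma reach_y j : y \in reach j.
Proof. by apply: (subsetP (reach_mono (leq0n j))); rewrite inE. Qed.

Lemma reach_X j : y \in X -> reach j \subset X.
Proof.
move=> hy; elim: j => [|j IH]; first by rewrite sub1set.
by rewrite reachS subUset IH /=; apply/subsetP => x; rewrite inE => /andP [].
Qed.

Lemma reach_path p : path (graph_rel X) y p -> last y p \in reach (size p).
Proof.
elim/last_ind: p => [|p w IH]; first by rewrite inE.
rewrite rcons_path last_rcons size_rcons => /andP [hp he].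
rewrite reachS inE; apply/orP; right; rewrite inE.
have : graph_rel X (last y p) w := he.
move=> he'; move: (he') => /and3P [_ -> _] /=.
by apply/existsP; exists (last y p); rewrite IH.
Qed.

Lemma reach_stable j m : reach j.+1 = reach j -> reach (m + j) = reach j.
Proof. by move=> h; elim: m => [|m IH] //=; rewrite -/(reach (m + j)) IH. Qed.

Definition U j := (\sum_(w in reach j) <<uvec w>>)%MS.

Lemma U_sup j w : w \in reach j -> (uvec w <= U j)%MS.
Proof. by move=> hw; apply: (sumsmx_sup w) => //; rewrite genmxE. Qed.

Lemma U_mono j : (U j <= U j.+1)%MS.
Proof.
apply/sumsmx_subP => w hw; rewrite genmxE; apply: U_sup.
exact: (subsetP (reach_sub j)).
Qed.

Hypothesis XT : forall x, x \in X -> is_transvection x.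
Hypothesis hy : y \in X.

Lemma rank_grow j : reach j.+1 != reach j -> (j < \rank (U j))%N.
Proof.
elim: j => [|j IH] hne.
  have := mxrankS (U_sup (reach_y 0)); rewrite rank_rV.
  by case/tdataP: (tdata_pick (XT hy)) => -> .
have hne' : reach j.+1 != reach j.
  apply: contra hne => /eqP h; apply/eqP.
  by have := reach_stable 2 h; have := reach_stable 1 h => /= -> ->.
have := IH hne'; move=> hlt.
have hsub := reach_sub j.+1.
have : ~~ (reach j.+2 \subset reach j.+1).
  by apply: contra hne => h; rewrite eqEsubset h.
case/subsetPn => x hx hxn.
move: hx; rewrite reachS inE (negbTE hxn) /= inE => /andP [xX /existsP [w /andP [hw hwx]]].
have hwn : w \notin reach j.
  apply: contra hxn => hwj; rewrite reachS inE; apply/orP; right.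
  by rewrite inE xX; apply/existsP; exists w; rewrite hwj.
have hker : (U j <= kermx (fvec x))%MS.
  apply/sumsmx_subP => w' hw'; rewrite genmxE sub_kermx.
  apply/negPn/negP => h.
  have tw' := tdata_pick (XT (subsetP (reach_X j hy) _ hw')).
  have tx := tdata_pick (XT xX).
  have he := vec_edge tw' tx h.
  apply: (negP hxn); rewrite reachS inE; apply/orP; right.
  rewrite inE xX; apply/existsP; exists w'; rewrite hw' /graph_rel he xX.
  by rewrite (subsetP (reach_X j hy) _ hw').
have wX := subsetP (reach_X j.+1 hy) _ hw.
have hwe : uvec w *m fvec x != 0.
  by move: hwx => /and3P [_ _ he]; apply: edge_vec => //; apply: XT.
have hlt2 : (U j < U j.+1)%MS.
  rewrite ltmxE U_mono /=; apply/negP => h.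
  have := submx_trans (submx_trans (@U_sup j.+1 w hw) h) hker.
  by rewrite sub_kermx (negbTE hwe).
by apply: leq_ltn_trans hlt (rank_ltmx hlt2).
Qed.

Lemma reach_n j : reach j \subset reach n.
Proof.
have stab : reach n.+1 = reach n.
  apply/eqP; apply/negPn/negP => h; have := rank_grow h.
  by rewrite ltnNge rank_leq_col.
case: (leqP j n) => h; first exact: reach_mono.
by rewrite -(subnK (ltnW h)) reach_stable.
Qed.

Lemma connect_reach x : connect (graph_rel X) y x -> x \in reach n.
Proof.
case/connectP => p hp ->; exact: (subsetP (reach_n (size p))) (reach_path hp).
Qed.
End Reach.

Lemma le_aux1 j : (1 + 4 * j <= 1 + 4 * j.+1)%N.
Proof. lia. Qed.
Lemma le_aux2 j : (1 + 4 * j + 4 <= 1 + 4 * j.+1)%N.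
Proof. lia. Qed.

Lemma le_aux3 n : (1 + 4 * n <= 5 * n)%N = (0 < n)%N.
Proof. apply/idP/idP; lia. Qed.
Lemma le_aux4 n : (4 <= n)%N -> (1 <= 5 * n)%N.
Proof. lia. Qed.

Section Core.
Variables (F : finFieldType) (n : nat).
Local Notation M := 'M[F]_n.

Lemma ball_0_ex (X : {set M}) y : reach X y 0 = [set y].
Proof. by []. Qed.

Lemma claimE k J r (X : {set M}) y (v : 'rV[F]_n) j :
  form_ok k J r -> X \subset Tset k J r -> y \in X -> v *m fvec y != 0 ->
  (2%:R : F) != 0 ->
  forall x, x \in reach X y j -> forall psi : 'cV[F]_n, uvec x *m psi != 0 ->
  exists z u' f', [/\ z \in Tset k J r, z \in ball X (1 + 4 * j)%N, tdata z u' f',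
     v *m f' != 0 & u' *m psi != 0].
Proof.
move=> fo XT hy hvy two.
have XTt x : x \in X -> is_transvection x.
  by move=> hx; have := subsetP XT _ hx; rewrite inE => /andP [].
elim: j => [|j IH] x.
  rewrite ball_0_ex inE => /eqP -> psi hpsi.
  exists y, (uvec y), (fvec y); split.
  - exact: subsetP XT _ hy.
  - by rewrite muln0 addn0; apply: ball1; apply: sgX.
  - exact: tdata_pick (XTt _ hy).
  - exact: hvy.
  - exact: hpsi.
rewrite reachS inE => /orP [hx|].
  move=> psi hpsi; have [z [u' [f' [h1 h2 h3 h4 h5]]]] := IH x hx psi hpsi.
  have hle := le_aux1 j.
  exists z, u', f'; split; [exact: h1| |exact: h3|exact: h4|exact: h5].
  exact: (subsetP (ball_mono X hle) _ h2).
rewrite inE => /andP [xX /existsP [w /andP [hw hwx]]] psi hpsi.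
have wX := subsetP (reach_X j hy) _ hw.
have hwe : uvec w *m fvec x != 0.
  by move: hwx => /and3P [_ _ he]; apply: edge_vec => //; apply: XTt.
have [z [u' [f' [h1 h2 h3 h4 h5]]]] := IH w hw (fvec x) hwe.
have [z' [u2 [f2 [g1 g2 g3 g4 g5]]]] :=
  step fo XT h2 h3 xX (tdata_pick (XTt _ xX)) h5 hpsi h4 two.
have hle := le_aux2 j.
exists z', u2, f2; split; [exact: g1| |exact: g3|exact: g4|exact: g5].
exact: (subsetP (ball_mono X hle) _ g2).
Qed.

Lemma spanV_ex (X : {set M}) (phi : 'cV[F]_n) : spans_V X -> phi != 0 ->
  exists2 s, s \in X & uvec s *m phi != 0.
Proof.
move=> sV hphi; case: (boolP [exists s in X, uvec s *m phi != 0]).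
  by case/existsP => s /andP [hs h]; exists s.
move=> h; have hk : (\sum_(s in X) <<uvec s>> <= kermx phi)%MS.
  apply/sumsmx_subP => s hs; rewrite genmxE sub_kermx.
  apply/negPn/negP => hne; case/negP: h; apply/existsP; exists s; by rewrite hs hne.
have := submx_trans sV hk; rewrite sub_kermx mul1mx => h0.
by rewrite h0 in hphi.
Qed.

Lemma spanVd_ex (X : {set M}) (v : 'rV[F]_n) : spans_Vdual X -> v != 0 ->
  exists2 s, s \in X & v *m fvec s != 0.
Proof.
move=> sV hv; case: (boolP [exists s in X, v *m fvec s != 0]).
  by case/existsP => s /andP [hs h]; exists s.
move=> h; have hk : (\sum_(s in X) <<(fvec s)^T>> <= kermx v^T)%MS.
  apply/sumsmx_subP => s hs; rewrite genmxE sub_kermx -trmx_mul trmx_eq0.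
  apply/negPn/negP => hne; case/negP: h; apply/existsP; exists s; by rewrite hs hne.
have := submx_trans sV hk; rewrite sub_kermx mul1mx trmx_eq0 => h0.
by rewrite h0 in hv.
Qed.
End Core.

Theorem lemma4p1 :
  exists C : nat,
  forall (F : finFieldType) (n : nat) (k : gkind) (J : 'M[F]_n) (r : nat),
    odd #|F| -> (4 <= n)%N -> form_ok k J r ->
  forall X : {set 'M[F]_n},
    X \subset Tset k J r ->
    generates X (Gset k J r) ->
    (* (P2) *)
    spans_V X -> spans_Vdual X -> strongly_connected X ->
    (* (P3) *)
    generates_field (fun w => exists rs, is_cycle X rs /\ w = weight rs) ->
    (* (P4) *)
    (k = KSp -> forall rs, is_cycle (Tset k J r) rs -> symplectic_cycle rs) ->
    (* (P5) *)
    (k = KSL -> forall r' : nat, (r' * r' = #|F|)%N ->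
       exists rs, is_cycle X rs /\ ~ unitary_cycle r' rs) ->
  exists X' : {set 'M[F]_n},
    [/\ X \subset X', X' \subset Tset k J r, ell_le X X' (C * n),
        (forall s t, s \in Tset k J r -> t \in Tset k J r -> ~~ edge s t ->
           exists2 x, x \in X' & edge s x && edge x t)
      & (forall X'' : {set 'M[F]_n}, X' \subset X'' -> X'' \subset Tset k J r ->
           forall s t, s \in X'' -> t \in X'' ->
             s = t \/ edge s t \/ exists2 x, x \in X'' & edge s x && edge x t)].
Proof.
exists 5%N => F n k J r odF hn fo X XT _ sV sVd sc _ _ _.
have two := two_neq0 odF.
have XTt x : x \in X -> is_transvection x.
  by move=> hx; have := subsetP XT _ hx; rewrite inE => /andP [].
have hle : (1 + 4 * n <= 5 * n)%N by rewrite le_aux3; apply: leq_trans hn.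
have core : forall (v : 'rV[F]_n) (phi : 'cV[F]_n), v != 0 -> phi != 0 ->
   exists z u' f', [/\ z \in Tset k J r, z \in ball X (5 * n)%N, tdata z u' f',
     v *m f' != 0 & u' *m phi != 0].
  move=> v phi hv hphi.
  have [y hy hvy] := spanVd_ex sVd hv.
  have [x0 hx0 hxp] := spanV_ex sV hphi.
  have hc := sc y x0 hy hx0.
  have hr := connect_reach XTt hy hc.
  have [z [u' [f' [h1 h2 h3 h4 h5]]]] := claimE fo XT hy hvy two hr hxp.
  exists z, u', f'; split; [exact: h1| |exact: h3|exact: h4|exact: h5].
  exact: (subsetP (ball_mono X hle) _ h2).
set X' := Tset k J r :&: ball X (5 * n)%N.
have P4 : forall s t, s \in Tset k J r -> t \in Tset k J r ->
    exists2 x, x \in X' & edge s x && edge x t.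
  move=> s t hs ht.
  have ts : tdata s (uvec s) (fvec s).
    by apply: tdata_pick; move: hs; rewrite inE => /andP [].
  have tt : tdata t (uvec t) (fvec t).
    by apply: tdata_pick; move: ht; rewrite inE => /andP [].
  have [hus _ _ _] := tdataP ts; have [_ hft _ _] := tdataP tt.
  have [z [u' [f' [h1 h2 h3 h4 h5]]]] := core _ _ hus hft.
  exists z; first by rewrite inE h1 h2.
  by rewrite (vec_edge ts h3 h4) (vec_edge h3 tt h5).
exists X'; split.
- apply/subsetP => x hx; rewrite inE (subsetP XT _ hx) /=.
  apply: (subsetP (ball_mono X (le_aux4 hn))); apply: ball1; exact: sgX.
- exact: subsetIl.
- by exists (5 * n)%N; split => //; apply: subsetIr.
- by move=> s t hs ht _; apply: P4.
- move=> X'' h1 h2 s t hs ht; right; right.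
  have [x hx he] := P4 s t (subsetP h2 _ hs) (subsetP h2 _ ht).
  by exists x => //; apply: (subsetP h1).
Qed.
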